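(* Let $c,d\in\mathbb{R}$ with $d\neq0$ be given. Then $\mathcal{S}[\mu,\lambda]=\mathcal{S}^*[\mu,\lambda]$ for all $\mu,\lambda>0$.
   Context: Impulse time sequences are strictly increasing sequences $\{t_k\}$ in $(t_0,\infty)$, finite or infinite and unbounded, with no finite accumulation point. For $t\ge s\ge t_0$, $N(t,s)$ denotes the number of impulse times in the half-open interval $(s,t]$ and $N^*(t,s)$ the number of impulse times in the closed interval $[s,t]$. $\mathcal{S}[\mu,\lambda]$ is the class of impulse time sequences satisfying $-dN(t,s)-(c-\lambda)(t-s)\le\mu$ for all $t\ge s\ge t_0$, and $\mathcal{S}^*[\mu,\lambda]$ is the class of impulse time sequences satisfying $-dN^*(t,s)-(c-\lambda)(t-s)\le\mu$ for all $t\ge s\ge t_0$. *)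

(* Defs.v *)
From HB Require Import structures.
From mathcomp Require Import all_boot all_order all_algebra.
From mathcomp Require Import finmap.
From mathcomp Require Import all_classical all_reals.
Set Implicit Arguments. Unset Strict Implicit. Unset Printing Implicit Defensive.
Import Order.TTheory GRing.Theory Num.Theory.
Local Open Scope classical_set_scope.
Local Open Scope ring_scope.
Local Open Scope fset_scope.

(* An impulse time sequence is given by its length [len] (None = infinite,
   Some n = the finite sequence t_0 < ... < t_{n-1}) and the map [tk]. *)
Definition idx_dom (len : option nat) : set nat :=
  fun k => match len with Some n => (k < n)%N | None => True end.

Definition impulse_seq (R : realType) (t0 : R) (len : option nat)
    (tk : nat -> R) : Prop :=
  [/\ (forall k, idx_dom len k -> t0 < tk k),
      (forall i j, idx_dom len i -> idx_dom len j -> (i < j)%N -> tk i < tk j),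
      (len = None -> forall M : R, exists k, M < tk k) &
      (forall x : R, exists2 e : R, 0 < e &
         finite_set [set k | idx_dom len k /\ `|tk k - x| < e])].

Definition Ncount (R : realType) (len : option nat) (tk : nat -> R) (t s : R)
  : nat :=
  (#|` fset_set [set k | idx_dom len k /\ s < tk k /\ tk k <= t] |).

Definition Nstar (R : realType) (len : option nat) (tk : nat -> R) (t s : R)
  : nat :=
  (#|` fset_set [set k | idx_dom len k /\ s <= tk k /\ tk k <= t] |).

Definition S_class (R : realType) (c d t0 mu lam : R) :
    set (option nat * (nat -> R)) :=
  [set p | impulse_seq t0 p.1 p.2 /\
     forall t s, t0 <= s -> s <= t ->
       - d * (Ncount p.1 p.2 t s)%:R - (c - lam) * (t - s) <= mu].

Definition S_star_class (R : realType) (c d t0 mu lam : R) :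
    set (option nat * (nat -> R)) :=
  [set p | impulse_seq t0 p.1 p.2 /\
     forall t s, t0 <= s -> s <= t ->
       - d * (Nstar p.1 p.2 t s)%:R - (c - lam) * (t - s) <= mu].

(* Main.v *)
Require Import Defs.
From HB Require Import structures.
From mathcomp Require Import all_boot all_order all_algebra.
From mathcomp Require Import finmap.
From mathcomp Require Import all_classical all_reals.
From mathcomp Require Import ring lra.
Import Order.TTheory GRing.Theory Num.Theory.
Local Open Scope classical_set_scope.
Local Open Scope ring_scope.

Definition domb (len : option nat) (k : nat) : bool :=
  if len is Some n then (k < n)%N else true.

Lemma dombE len k : idx_dom len k <-> domb len k.
Proof. by case: len. Qed.

Lemma dom_down len i j : (i <= j)%N -> idx_dom len j -> idx_dom len i.
Proof. by case: len => //= n ij jn; apply: leq_ltn_trans ij jn. Qed.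

Section Aux.
Variables (R : realType) (t0 : R) (len : option nat) (tk : nat -> R).
Hypothesis hI : impulse_seq t0 len tk.

Lemma mono i j : idx_dom len i -> idx_dom len j -> (i <= j)%N -> tk i <= tk j.
Proof.
case: hI => _ hinc _ _ di dj; rewrite leq_eqVlt => /orP[/eqP->//|lt].
exact/ltW/hinc.
Qed.

Lemma ex_beyond (x : R) : exists k, ~~ domb len k || (x < tk k).
Proof.
case: hI => _ _ hunb _; case E: len => [n|].
  by exists n; rewrite /domb ltnn.
by have [k hk] := hunb E x; exists k; rewrite hk orbT.
Qed.

Lemma dir1 (t s d : R) : t0 <= s -> 0 < d -> exists s',
  [/\ t0 <= s', s' <= s, s - s' <= d &
   [set k | idx_dom len k /\ s' < tk k /\ tk k <= t] =
   [set k | idx_dom len k /\ s <= tk k /\ tk k <= t]].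
Proof.
move=> t0s d0.
have [k hk] : exists k, ~~ domb len k || (s <= tk k).
  have [k hk] := ex_beyond s; exists k; move: hk => /orP[->//|/ltW->].
  by rewrite orbT.
case: (ex_minnP (ex_intro (fun k => ~~ domb len k || (s <= tk k)) k hk)).
move=> k0 Pk0 mink0.
have prev : forall j, (j < k0)%N -> idx_dom len j /\ tk j < s.
  move=> j jk; have : ~~ (~~ domb len j || (s <= tk j)).
    by apply/negP => /mink0; rewrite leqNgt jk.
  by rewrite negb_or negbK -ltNge => /andP[/dombE ? ?].
have below : forall k, idx_dom len k -> tk k < s -> (k < k0)%N.
  move=> j dj tj; rewrite ltnNge; apply/negP => kj.
  have dk0 := @dom_down len _ _ kj dj.
  move: Pk0; rewrite (proj1 (dombE _ _) dk0) /= => sk0.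
  have := mono _ _ dk0 dj kj; lra.
pose m := if k0 is j.+1 then tk j else t0.
have ms : m <= s.
  rewrite /m; clear m; case: k0 {Pk0 mink0 below} prev => [|j] prev //.
  by have [_ /ltW] := prev j (ltnSn j).
have mlt : forall k, idx_dom len k -> s <= tk k -> m < tk k.
  move=> j dj sj; rewrite /m; clear ms m; case: k0 {Pk0 mink0 below} prev => [|j'] prev.
    by case: hI => hgt _ _ _; apply: hgt.
  have [_ ?] := prev j' (ltnSn j'); lra.
have mge : forall k, idx_dom len k -> tk k < s -> tk k <= m.
  move=> j dj tj; have := below j dj tj; rewrite /m; clear ms mlt m.
  case: k0 {Pk0 mink0 below} prev => [|j'] prev //.
  rewrite ltnS => jj'; have [dj' _] := prev j' (ltnSn j').
  exact: mono.
exists (Num.max (Num.max t0 (s - d)) m); split.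
- by rewrite !le_max lexx.
- by rewrite !ge_max t0s ms /= andbT; lra.
- have : s - d <= Num.max (Num.max t0 (s - d)) m by rewrite !le_max lexx orbT.
  lra.
- apply/seteqP; split => j /= [dj [hj ht]]; split => //; split => //.
    rewrite leNgt; apply/negP => js; have := mge j dj js.
    move: hj; rewrite !gt_max => /andP[/andP[_ _]]; lra.
  rewrite !gt_max (mlt j dj hj) andbT; apply/andP; split.
    by case: hI => hgt _ _ _; apply: hgt.
  lra.
Qed.

Lemma dir2 (t s d : R) : s < t -> 0 < d -> exists s',
  [/\ s < s', s' <= t, s' - s <= d &
   [set k | idx_dom len k /\ s' <= tk k /\ tk k <= t] =
   [set k | idx_dom len k /\ s < tk k /\ tk k <= t]].
Proof.
move=> st d0.
have [k hk] := ex_beyond s.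
case: (ex_minnP (ex_intro (fun k => ~~ domb len k || (s < tk k)) k hk)).
move=> k1 Pk1 mink1.
pose m := if domb len k1 then tk k1 else t.
have sm : s < m by rewrite /m; case: (domb len k1) Pk1.
have mle : forall k, idx_dom len k -> s < tk k -> m <= tk k.
  move=> j dj sj; have kj : (k1 <= j)%N by apply: mink1; rewrite sj orbT.
  have dk1 := @dom_down len _ _ kj dj.
  by rewrite /m (proj1 (dombE _ _) dk1); apply: mono.
have hs' : s < Num.min (Num.min (s + d) t) m by rewrite !lt_min sm st andbT; lra.
exists (Num.min (Num.min (s + d) t) m); split => //.
- by rewrite !ge_min lexx orbT.
- have : Num.min (Num.min (s + d) t) m <= s + d by rewrite !ge_min lexx.
  lra.
- apply/seteqP; split => j /= [dj [hj ht]]; split => //; split => //.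
    lra.
  by rewrite !ge_min (mle j dj hj) orbT.
Qed.

End Aux.

Lemma lin_bound (R : realType) (x y mu L w del : R) :
  x = y + L * w -> y <= mu -> `|w| <= del -> x <= mu + `|L| * del.
Proof.
move=> -> ymu wd; have : L * w <= `|L| * del.
  apply: le_trans (ler_norm _) _; rewrite normrM; apply: ler_wpM2l => //.
lra.
Qed.

Lemma eps_trick (R : realType) (a mu L : R) :
  (forall del, 0 < del -> a <= mu + `|L| * del) -> a <= mu.
Proof.
move=> H; apply/ler_addgt0Pr => e e0.
have hL : 0 < `|L| + 1 by have := normr_ge0 L; lra.
have := H (e / (`|L| + 1)) (divr_gt0 e0 hL).
have : `|L| * (e / (`|L| + 1)) <= e.
  rewrite mulrA ler_pdivrMr // mulrDr mulr1; have := normr_ge0 L.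
  move=> ?; nra.
lra.
Qed.

Theorem lemma2 (R : realType) (c d t0 : R) (hd : d != 0) :
  forall mu lam : R, 0 < mu -> 0 < lam ->
    S_class c d t0 mu lam = S_star_class c d t0 mu lam.
Proof.
move=> mu lam mu0 lam0; apply/seteqP; split => -[len tk] /= [hI hS];
  split => // t s t0s st.
- apply: (@eps_trick _ _ _ (c - lam)) => del del0.
  have [s' [t0s' s's ss' E]] := @dir1 _ _ _ _ hI t s del t0s del0.
  have := hS t s' t0s' (le_trans s's st).
  rewrite /Ncount /Nstar E => h.
  apply: (@lin_bound _ _ _ _ (c - lam) (s - s') del _ h); last by rewrite ger0_norm; lra.
  rewrite !mulrBr; lra.
- have [->|st'] := eqVneq s t.
    have -> : Ncount len tk t t = 0%N.
      rewrite /Ncount; have -> : [set k | idx_dom len k /\ t < tk k /\ tk k <= t] = set0.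
        by apply/seteqP; split => j //= [_ [? ?]]; lra.
      by rewrite fset_set0.
    rewrite mulr0 subrr mulr0 subr0; lra.
  have lt : s < t by rewrite lt_neqAle st' st.
  apply: (@eps_trick _ _ _ (c - lam)) => del del0.
  have [s' [ss' s't s'd E]] := @dir2 _ _ _ _ hI t s del lt del0.
  have := hS t s' (le_trans t0s (ltW ss')) s't.
  rewrite /Ncount /Nstar E => h.
  apply: (@lin_bound _ _ _ _ (c - lam) (s - s') del _ h); last by rewrite ltr0_norm; lra.
  rewrite !mulrBr; lra.
Qed.
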